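(* There is an absolute constant $C$ such that for every $n\geq 1$ and every $w\in\{0,1\}^n$, there is a first-order sentence over $\tau_{\mathsf{string}}$ with at most $3\log_3(n)+C$ quantifiers that is true in $\mathbf{B}_w$ and false in $\mathbf{B}_{w'}$ for every binary string $w'\neq w$ of any length $\geq 1$.
   Context: Vocabulary $\tau_{\mathsf{string}}=\langle <, S;\ \mathsf{min},\mathsf{max}\rangle$ with $<$ binary, $S$ unary, $\mathsf{min},\mathsf{max}$ constants. A string $w=w_1\cdots w_n\in\{0,1\}^n$ ($n\geq 1$) is encoded by the structure $\mathbf{B}_w$ with universe $\{1,\dots,n\}$, $<$ the usual order, $S=\{i: w_i=1\}$, $\mathsf{min}=1$, $\mathsf{max}=n$. The number of quantifiers is the number of quantifier occurrences. *)

(* Defs.v *)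
From Stdlib Require Import Reals List Arith.
Import ListNotations.

Inductive term : Type :=
| TVar : nat -> term
| TMin : term
| TMax : term.

Inductive formula : Type :=
| FEq   : term -> term -> formula
| FLt   : term -> term -> formula
| FS    : term -> formula
| FTrue : formula
| FFalse : formula
| FNot  : formula -> formula
| FAnd  : formula -> formula -> formula
| FOr   : formula -> formula -> formula
| FImp  : formula -> formula -> formula
| FEx   : nat -> formula -> formula
| FAll  : nat -> formula -> formula.

Fixpoint qcount (f : formula) : nat :=
  match f with
  | FEq _ _ | FLt _ _ | FS _ | FTrue | FFalse => 0
  | FNot g => qcount g
  | FAnd g h | FOr g h | FImp g h => qcount g + qcount h
  | FEx _ g | FAll _ g => S (qcount g)
  end.

Definition term_vars (t : term) : list nat :=
  match t with TVar x => [x] | _ => [] end.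

Fixpoint fv (f : formula) : list nat :=
  match f with
  | FEq s t | FLt s t => term_vars s ++ term_vars t
  | FS t => term_vars t
  | FTrue | FFalse => []
  | FNot g => fv g
  | FAnd g h | FOr g h | FImp g h => fv g ++ fv h
  | FEx x g | FAll x g => filter (fun y => negb (Nat.eqb y x)) (fv g)
  end.

Definition sentence (f : formula) : Prop := fv f = [].

(* The structure B_w: universe {1,...,n} with n = length w, usual order,
   S = {i | w_i = 1}, min = 1, max = n.  Position i (1-based) carries the
   letter nth (i-1) w false ; true encodes the letter 1. *)
Definition eval_term (w : list bool) (a : nat -> nat) (t : term) : nat :=
  match t with
  | TVar x => a x
  | TMin => 1
  | TMax => length w
  end.

Definition update (a : nat -> nat) (x v : nat) : nat -> nat :=
  fun y => if Nat.eqb y x then v else a y.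

Fixpoint sat (w : list bool) (a : nat -> nat) (f : formula) : Prop :=
  match f with
  | FEq s t => eval_term w a s = eval_term w a t
  | FLt s t => eval_term w a s < eval_term w a t
  | FS t => nth (eval_term w a t - 1) w false = true
  | FTrue => True
  | FFalse => False
  | FNot g => ~ sat w a g
  | FAnd g h => sat w a g /\ sat w a h
  | FOr g h => sat w a g \/ sat w a h
  | FImp g h => sat w a g -> sat w a h
  | FEx x g => exists v, 1 <= v <= length w /\ sat w (update a x v) g
  | FAll x g => forall v, 1 <= v <= length w -> sat w (update a x v) g
  end.

(* Truth of a sentence in B_w (assignment irrelevant for sentences; we use
   the assignment sending every variable to min = 1, an element of the
   universe when length w >= 1). *)
Definition models (w : list bool) (f : formula) : Prop := sat w (fun _ => 1) f.

Definition log3 (x : R) : R := ln x / ln 3.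

(* Main.v *)
Require Import Defs.
Set Warnings "-all".
From Stdlib Require Import Reals List Arith Lia Lra Classical.
Import ListNotations.

Arguments update : simpl never.

Definition alt := (formula * list bool * term * term)%type.

Definition tl (m : nat) (t : term) : Prop :=
  match t with TVar x => x < m | _ => True end.

Fixpoint qfl (m : nat) (f : formula) : Prop :=
  match f with
  | FEq s t | FLt s t => tl m s /\ tl m t
  | FS t => tl m t
  | FTrue | FFalse => True
  | FNot g => qfl m g
  | FAnd g h | FOr g h | FImp g h => qfl m g /\ qfl m h
  | FEx _ _ | FAll _ _ => False
  end.

Lemma upd_eq a x v : update a x v x = v.
Proof. unfold update. now rewrite Nat.eqb_refl. Qed.
Lemma upd_neq a x v y : y <> x -> update a x v y = a y.
Proof. intro H. unfold update. apply Nat.eqb_neq in H. now rewrite H. Qed.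

Lemma tl_mono m m' t : tl m t -> m <= m' -> tl m' t.
Proof. destruct t; simpl; lia. Qed.
Lemma qfl_mono m m' f : qfl m f -> m <= m' -> qfl m' f.
Proof. induction f; simpl; intuition eauto using tl_mono. Qed.

Lemma ev_upd w m t a x v : tl m t -> m <= x -> eval_term w (update a x v) t = eval_term w a t.
Proof. destruct t; simpl; auto. intros. apply upd_neq. lia. Qed.

Lemma sat_upd w m f a x v : qfl m f -> m <= x -> (sat w (update a x v) f <-> sat w a f).
Proof.
  induction f; simpl; intros Hq Hx;
    repeat match goal with H : _ /\ _ |- _ => destruct H end;
    repeat rewrite (ev_upd w m) by auto;
    repeat match goal with IH : qfl m ?g -> _ -> _ , H : qfl m ?g |- _ => specialize (IH H Hx) end;
    try tauto.
  all: try (rewrite IHf; tauto).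
  all: try (rewrite IHf1, IHf2; tauto).
Qed.

Lemma qfl_qcount m f : qfl m f -> qcount f = 0.
Proof. induction f; simpl; intuition; lia. Qed.

Lemma qfl_fv m f : qfl m f -> forall y, In y (fv f) -> y < m.
Proof.
  induction f; simpl; intros Hq y Hy; try tauto.
  - destruct Hq. apply in_app_or in Hy. destruct t, t0; simpl in *; intuition.
  - destruct Hq. apply in_app_or in Hy. destruct t, t0; simpl in *; intuition.
  - destruct t; simpl in *; intuition.
  - eauto.
  - destruct Hq. apply in_app_or in Hy. intuition eauto.
  - destruct Hq. apply in_app_or in Hy. intuition eauto.
  - destruct Hq. apply in_app_or in Hy. intuition eauto.
Qed.

Fixpoint conj (l : list formula) : formula :=
  match l with [] => FTrue | f :: l => FAnd f (conj l) end.

Lemma sat_conj w a l : sat w a (conj l) <-> forall f, In f l -> sat w a f.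
Proof.
  induction l; simpl; split; intros H.
  - tauto.
  - auto.
  - intros f [<-|Hf]; [tauto|]. apply IHl; tauto.
  - split; [apply H; auto|]. apply IHl. auto.
Qed.

Lemma qfl_conj m l : (forall f, In f l -> qfl m f) -> qfl m (conj l).
Proof. induction l; simpl; auto. Qed.

Definition leF s t := FNot (FLt t s).
Definition inI s t u := FAnd (FLt s u) (leF u t).
Definition sbit t (b : bool) := if b then FS t else FNot (FS t).
Definition relp (p : list bool) s t := match p with [] => FEq s t | _ => FLt s t end.

Definition pa n := (n + 2) / 3.
Definition pb n := (n - pa n + 1) / 2.
Definition P1 (v : list bool) := firstn (pa (length v)) v.
Definition P2 (v : list bool) := firstn (pb (length v)) (skipn (pa (length v)) v).
Definition P3 (v : list bool) := skipn (pa (length v) + pb (length v)) v.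

Definition Z1 k := TVar (3 * k).
Definition Z2 k := TVar (3 * k + 1).
Definition U k := TVar (3 * k + 2).

Definition cond k (al : alt) : formula :=
  let '(g, v, lo, hi) := al in
  FImp g (FAnd (relp (P1 v) lo (Z1 k)) (FAnd (relp (P2 v) (Z1 k) (Z2 k)) (relp (P3 v) (Z2 k) hi))).

Definition kids k (al : alt) : list alt :=
  let '(g, v, lo, hi) := al in
  [(FAnd g (inI lo (Z1 k) (U k)), P1 v, lo, Z1 k);
   (FAnd g (inI (Z1 k) (Z2 k) (U k)), P2 v, Z1 k, Z2 k);
   (FAnd g (inI (Z2 k) hi (U k)), P3 v, Z2 k, hi)].

Definition fin k (al : alt) : formula :=
  let '(g, v, lo, hi) := al in
  FImp g (match v with
          | [] => FEq lo hi
          | [b] => FAnd (FLt lo hi) (FAnd (FImp (inI lo hi (TVar (3 * k))) (FEq (TVar (3 * k)) hi)) (sbit hi b))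
          | _ => FFalse end).

Fixpoint lev k d (alts : list alt) : formula :=
  match d with
  | 0 => FAll (3 * k) (conj (map (fin k) alts))
  | S d' => FEx (3 * k) (FEx (3 * k + 1)
             (FAnd (conj (map (cond k) alts))
                   (FAll (3 * k + 2) (lev (S k) d' (flat_map (kids k) alts)))))
  end.

Definition AltOK m (al : alt) : Prop :=
  let '(g, v, lo, hi) := al in qfl m g /\ tl m lo /\ tl m hi.

Lemma sbit_qfl m t b : tl m t -> qfl m (sbit t b).
Proof. destruct b; simpl; auto. Qed.
Lemma relp_qfl m p s t : tl m s -> tl m t -> qfl m (relp p s t).
Proof. destruct p; simpl; auto. Qed.

Lemma tl_up k t : tl (3 * k) t -> forall j, tl (3 * k + j) t.
Proof. intros H j. eapply tl_mono; [exact H|lia]. Qed.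
Lemma qfl_up k g : qfl (3 * k) g -> forall j, qfl (3 * k + j) g.
Proof. intros H j. eapply qfl_mono; [exact H|lia]. Qed.

Lemma cond_qfl k al : AltOK (3 * k) al -> qfl (3 * k + 2) (cond k al).
Proof.
  destruct al as [[[g v] lo] hi]; simpl. intros (Hg & Hl & Hh).
  split; [apply qfl_up; auto|].
  split; [|split]; apply relp_qfl; unfold Z1, Z2; simpl; try lia; apply tl_up; auto.
Qed.

Lemma fin_qfl k al : AltOK (3 * k) al -> qfl (3 * k + 1) (fin k al).
Proof.
  destruct al as [[[g v] lo] hi]; simpl. intros (Hg & Hl & Hh).
  split; [apply qfl_up; auto|].
  pose proof (tl_up k lo Hl 1). pose proof (tl_up k hi Hh 1).
  destruct v as [|b [|c v]]; simpl; auto.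
  repeat split; simpl; auto; try lia.
  apply sbit_qfl. auto.
Qed.

Lemma kids_ok k al : AltOK (3 * k) al -> forall c, In c (kids k al) -> AltOK (3 * S k) c.
Proof.
  destruct al as [[[g v] lo] hi]; simpl. intros (Hg & Hl & Hh) c Hc.
  pose proof (tl_up k lo Hl 3). pose proof (tl_up k hi Hh 3). pose proof (qfl_up k g Hg 3).
  replace (3 * S k) with (3 * k + 3) by lia.
  unfold Z1, Z2, U in *.
  destruct Hc as [<-|[<-|[<-|[]]]]; unfold inI, leF; simpl; repeat split; simpl; auto; try lia.
  all: first [eapply qfl_mono; [exact Hg|lia] | eapply tl_mono; [exact Hl|lia] | eapply tl_mono; [exact Hh|lia]].
Qed.
Lemma qc_lev : forall d k alts, (forall al, In al alts -> AltOK (3 * k) al) ->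
  qcount (lev k d alts) = 3 * d + 1.
Proof.
  induction d; intros k alts H; simpl.
  - rewrite (qfl_qcount (3 * k + 1)); auto. apply qfl_conj. intros f Hf.
    apply in_map_iff in Hf. destruct Hf as [al [<- Hal]]. apply fin_qfl; auto.
  - rewrite (qfl_qcount (3 * k + 2)).
    + rewrite IHd. lia. intros c Hc. apply in_flat_map in Hc. destruct Hc as [al [Hal Hc]].
      eapply kids_ok; eauto.
    + apply qfl_conj. intros f Hf.
      apply in_map_iff in Hf. destruct Hf as [al [<- Hal]]. apply cond_qfl; auto.
Qed.

Lemma fv_lev : forall d k alts, (forall al, In al alts -> AltOK (3 * k) al) ->
  forall y, In y (fv (lev k d alts)) -> y < 3 * k.
Proof.
  induction d; intros k alts H y Hy; simpl in Hy.
  - apply filter_In in Hy. destruct Hy as [Hy Hne].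
    apply Bool.negb_true_iff, Nat.eqb_neq in Hne.
    assert (y < 3 * k + 1); [|lia].
    eapply (qfl_fv (3 * k + 1)); [|exact Hy]. apply qfl_conj. intros f Hf.
    apply in_map_iff in Hf. destruct Hf as [al [<- Hal]]. apply fin_qfl; auto.
  - apply filter_In in Hy. destruct Hy as [Hy Hne1].
    apply filter_In in Hy. destruct Hy as [Hy Hne2].
    apply Bool.negb_true_iff, Nat.eqb_neq in Hne1.
    apply Bool.negb_true_iff, Nat.eqb_neq in Hne2.
    apply in_app_or in Hy. destruct Hy as [Hy|Hy].
    + assert (y < 3 * k + 2); [|lia].
      eapply (qfl_fv (3 * k + 2)); [|exact Hy]. apply qfl_conj. intros f Hf.
      apply in_map_iff in Hf. destruct Hf as [al [<- Hal]]. apply cond_qfl; auto.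
    + apply filter_In in Hy. destruct Hy as [Hy Hne3].
      apply Bool.negb_true_iff, Nat.eqb_neq in Hne3.
      assert (y < 3 * S k); [|lia].
      eapply IHd; [|exact Hy].
      intros c Hc. apply in_flat_map in Hc. destruct Hc as [al [Hal Hc]].
      eapply kids_ok; eauto.
Qed.

Definition mt (w : list bool) l h (v : list bool) :=
  l + length v = h /\ forall i, i < length v -> nth (l + i) w false = nth i v false.

Lemma mt_app w l m h x y : mt w l m x -> mt w m h y -> mt w l h (x ++ y).
Proof.
  intros [E1 H1] [E2 H2]. unfold mt. rewrite length_app. split; [lia|].
  intros i Hi. destruct (Nat.lt_ge_cases i (length x)).
  - rewrite app_nth1 by auto. auto.
  - rewrite app_nth2 by auto. replace (l + i) with (m + (i - length x)) by lia.
    apply H2. lia.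
Qed.

Lemma mt_split w l h x y : mt w l h (x ++ y) -> mt w l (l + length x) x /\ mt w (l + length x) h y.
Proof.
  intros [E H]. unfold mt. rewrite length_app in *. split; split; try lia.
  - intros i Hi. rewrite H by lia. apply app_nth1; auto.
  - intros i Hi. replace (l + length x + i) with (l + (length x + i)) by lia.
    rewrite H by lia. rewrite app_nth2 by lia. f_equal; lia.
Qed.

Lemma P_concat v : P1 v ++ P2 v ++ P3 v = v.
Proof.
  unfold P1, P2, P3. rewrite Nat.add_comm, <- skipn_skipn.
  rewrite firstn_skipn. apply firstn_skipn.
Qed.

Lemma divb n c : 0 < c -> c * (n / c) <= n < c * (n / c) + c.
Proof. intros. pose proof (Nat.div_mod n c ltac:(lia)). pose proof (Nat.mod_upper_bound n c ltac:(lia)). lia. Qed.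

Lemma P_len v d : length v <= 3 * d ->
  length (P1 v) <= d /\ length (P2 v) <= d /\ length (P3 v) <= d.
Proof.
  intro H. unfold P1, P2, P3, pb, pa. rewrite length_firstn, length_firstn, length_skipn, length_skipn.
  set (n := length v) in *.
  pose proof (divb (n + 2) 3 ltac:(lia)).
  pose proof (divb (n - (n + 2) / 3 + 1) 2 ltac:(lia)).
  lia.
Qed.

Definition range (w : list bool) (a : nat -> nat) := forall x, 1 <= a x <= length w.

Lemma ev_range w a t : range w a -> 1 <= eval_term w a t <= length w.
Proof. intros H. pose proof (H 0). destruct t; simpl; auto; lia. Qed.

Lemma range_upd w a x v : range w a -> 1 <= v <= length w -> range w (update a x v).
Proof. intros H Hv y. unfold update. destruct (y =? x); auto. Qed.

Lemma relp_sat w a p s t : sat w a (relp p s t) ->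
  (p = [] /\ eval_term w a s = eval_term w a t) \/ (p <> [] /\ eval_term w a s < eval_term w a t).
Proof. destruct p; simpl; intros H; [left|right]; split; auto; congruence. Qed.

Lemma relp_ok w a p s t : eval_term w a s + length p = eval_term w a t -> sat w a (relp p s t).
Proof. destruct p; simpl; intros; lia. Qed.

Lemma sbit_sat w a t b : sat w a (sbit t b) <-> nth (eval_term w a t - 1) w false = b.
Proof. destruct b; simpl; destruct (nth _ w false); intuition congruence. Qed.

Lemma inI_sat w a s t u : sat w a (inI s t u) <->
  eval_term w a s < eval_term w a u /\ ~ eval_term w a t < eval_term w a u.
Proof. simpl. tauto. Qed.

Definition upd2 a k v1 v2 := update (update a (3 * k) v1) (3 * k + 1) v2.
Definition upd3 a k v1 v2 v3 := update (upd2 a k v1 v2) (3 * k + 2) v3.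
Arguments upd2 : simpl never.
Arguments upd3 : simpl never.

Lemma ev_upd2 w k a v1 v2 t : tl (3 * k) t -> eval_term w (upd2 a k v1 v2) t = eval_term w a t.
Proof. intro H. unfold upd2. rewrite (ev_upd w (3 * k)); auto; try lia. rewrite (ev_upd w (3*k)); auto. Qed.
Lemma ev_upd3 w k a v1 v2 v3 t : tl (3 * k) t -> eval_term w (upd3 a k v1 v2 v3) t = eval_term w a t.
Proof. intro H. unfold upd3. rewrite (ev_upd w (3 * k)); auto; try lia. apply ev_upd2; auto. Qed.
Lemma sat_upd2 w k a v1 v2 g : qfl (3 * k) g -> (sat w (upd2 a k v1 v2) g <-> sat w a g).
Proof. intro H. unfold upd2. rewrite (sat_upd w (3 * k)); auto; try lia. rewrite (sat_upd w (3*k)); auto. tauto. Qed.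
Lemma sat_upd3 w k a v1 v2 v3 g : qfl (3 * k) g -> (sat w (upd3 a k v1 v2 v3) g <-> sat w a g).
Proof. intro H. unfold upd3. rewrite (sat_upd w (3 * k)); auto; try lia. apply sat_upd2; auto. Qed.

Lemma u3_z1 a k v1 v2 v3 : upd3 a k v1 v2 v3 (3 * k) = v1.
Proof. unfold upd3, upd2. rewrite !upd_neq by lia. apply upd_eq. Qed.
Lemma u3_z2 a k v1 v2 v3 : upd3 a k v1 v2 v3 (3 * k + 1) = v2.
Proof. unfold upd3, upd2. rewrite upd_neq by lia. apply upd_eq. Qed.
Lemma u3_u a k v1 v2 v3 : upd3 a k v1 v2 v3 (3 * k + 2) = v3.
Proof. unfold upd3. apply upd_eq. Qed.
Lemma u2_z1 a k v1 v2 : upd2 a k v1 v2 (3 * k) = v1.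
Proof. unfold upd2. rewrite !upd_neq by lia. apply upd_eq. Qed.
Lemma u2_z2 a k v1 v2 : upd2 a k v1 v2 (3 * k + 1) = v2.
Proof. unfold upd2. apply upd_eq. Qed.

Lemma range_upd3 w a k v1 v2 v3 : range w a -> 1 <= v1 <= length w -> 1 <= v2 <= length w ->
  1 <= v3 <= length w -> range w (upd3 a k v1 v2 v3).
Proof. intros. unfold upd3, upd2. repeat apply range_upd; auto. Qed.
Lemma range_upd2 w a k v1 v2 : range w a -> 1 <= v1 <= length w -> 1 <= v2 <= length w ->
  range w (upd2 a k v1 v2).
Proof. intros. unfold upd2. repeat apply range_upd; auto. Qed.

Lemma piece_sound w p ls lt :
  (p = [] /\ ls = lt) \/ (p <> [] /\ ls < lt) ->
  (forall v3, ls < v3 <= lt -> mt w ls lt p) -> mt w ls lt p.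
Proof.
  intros [[-> ->]|[_ H]] Hm.
  - split; simpl; [lia|intros; lia].
  - apply (Hm lt). lia.
Qed.

Lemma lev_sound w : forall d k alts a, range w a ->
  (forall al, In al alts -> AltOK (3 * k) al) ->
  sat w a (lev k d alts) ->
  forall g v lo hi, In (g, v, lo, hi) alts -> sat w a g ->
  mt w (eval_term w a lo) (eval_term w a hi) v.
Proof.
  induction d; intros k alts a Ha Hok Hs g v lo hi Hin Hg;
    pose proof (Hok _ Hin) as (Hgq & Hlq & Hhq); pose proof (Ha 0) as HN.
  - cbn [lev sat] in Hs.
    assert (Hf : forall v0, 1 <= v0 <= length w ->
              sat w (update a (3 * k) v0) (fin k (g, v, lo, hi))).
    { intros v0 Hv0. apply (proj1 (sat_conj _ _ _) (Hs v0 Hv0)). apply in_map_iff. eauto. }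
    assert (Hg' : forall v0, sat w (update a (3 * k) v0) g).
    { intros v0. apply (sat_upd w (3 * k)); auto. }
    assert (El : forall v0, eval_term w (update a (3 * k) v0) lo = eval_term w a lo).
    { intros. apply (ev_upd w (3 * k)); auto. }
    assert (Eh : forall v0, eval_term w (update a (3 * k) v0) hi = eval_term w a hi).
    { intros. apply (ev_upd w (3 * k)); auto. }
    destruct v as [|b [|c v]].
    + specialize (Hf 1 ltac:(lia)). cbn [fin sat] in Hf. specialize (Hf (Hg' 1)).
      rewrite El, Eh in Hf. split; simpl; [lia|intros; lia].
    + pose proof (Hf 1 ltac:(lia)) as H1. cbn [fin sat] in H1.
      destruct (H1 (Hg' 1)) as [Hlt _]. rewrite El, Eh in Hlt.
      pose proof (ev_range w a hi Ha).
      specialize (Hf (eval_term w a lo + 1) ltac:(lia)). cbn [fin sat] in Hf.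
      destruct (Hf (Hg' _)) as [_ [Hu Hb]].
      fold (inI lo hi (TVar (3 * k))) in Hu.
      rewrite inI_sat in Hu. cbn [eval_term] in Hu. rewrite upd_eq, El, Eh in Hu.
      assert (E : eval_term w a lo + 1 = eval_term w a hi) by (apply Hu; lia).
      apply sbit_sat in Hb. rewrite Eh in Hb.
      split; simpl; [lia|]. intros i Hi. assert (i = 0) by lia. subst i.
      rewrite <- Hb. f_equal. lia.
    + specialize (Hf 1 ltac:(lia)). cbn [fin sat] in Hf. destruct (Hf (Hg' 1)).
  - cbn [lev sat] in Hs. destruct Hs as [v1 [Hv1 [v2 [Hv2 [HC HL]]]]].
    fold (upd2 a k v1 v2) in HC, HL.
    assert (Hg1 : sat w (upd2 a k v1 v2) g) by (apply sat_upd2; auto).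
    assert (Hc : sat w (upd2 a k v1 v2) (cond k (g, v, lo, hi))).
    { apply (proj1 (sat_conj _ _ _) HC). apply in_map_iff. eauto. }
    cbn [cond sat] in Hc. destruct (Hc Hg1) as [R1 [R2 R3]].
    apply relp_sat in R1, R2, R3. unfold Z1, Z2 in R1, R2, R3. cbn [eval_term] in R1, R2, R3.
    rewrite u2_z1, u2_z2, ev_upd2 in * by auto.
    pose proof (ev_range w a lo Ha). pose proof (ev_range w a hi Ha).
    assert (Hk : forall c, In c (kids k (g, v, lo, hi)) -> forall v3, 1 <= v3 <= length w ->
      forall g' v' lo' hi', c = (g', v', lo', hi') ->
      sat w (upd3 a k v1 v2 v3) g' ->
      mt w (eval_term w (upd3 a k v1 v2 v3) lo') (eval_term w (upd3 a k v1 v2 v3) hi') v').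
    { intros c Hc' v3 Hv3 g' v' lo' hi' -> Hg'.
      apply (IHd (S k) (flat_map (kids k) alts) (upd3 a k v1 v2 v3)) with (g := g'); auto.
      - apply range_upd3; auto.
      - intros c' Hc''. apply in_flat_map in Hc''. destruct Hc'' as [al [Hal Hc'']].
        eapply kids_ok; eauto.
      - apply HL. auto.
      - apply in_flat_map. eauto. }
    rewrite <- (P_concat v).
    assert (M1 : mt w (eval_term w a lo) v1 (P1 v)).
    { apply piece_sound; [tauto|]. intros v3 Hv3.
      specialize (Hk _ (or_introl eq_refl) v3 ltac:(lia) _ _ _ _ eq_refl).
      unfold Z1 in Hk. cbn [eval_term] in Hk. rewrite u3_z1, ev_upd3 in Hk by auto.
      apply Hk. cbn [sat]. split; [apply sat_upd3; auto|].
      apply inI_sat. unfold Z1, U. cbn [eval_term]. rewrite u3_z1, u3_u, ev_upd3 by auto. lia. }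
    assert (M2 : mt w v1 v2 (P2 v)).
    { apply piece_sound; [tauto|]. intros v3 Hv3.
      specialize (Hk _ (or_intror (or_introl eq_refl)) v3 ltac:(lia) _ _ _ _ eq_refl).
      unfold Z1, Z2 in Hk. cbn [eval_term] in Hk. rewrite u3_z1, u3_z2 in Hk.
      apply Hk. cbn [sat]. split; [apply sat_upd3; auto|].
      apply inI_sat. unfold Z1, Z2, U. cbn [eval_term]. rewrite u3_z1, u3_z2, u3_u. lia. }
    assert (M3 : mt w v2 (eval_term w a hi) (P3 v)).
    { apply piece_sound; [tauto|]. intros v3 Hv3.
      specialize (Hk _ (or_intror (or_intror (or_introl eq_refl))) v3 ltac:(lia) _ _ _ _ eq_refl).
      unfold Z2 in Hk. cbn [eval_term] in Hk. rewrite u3_z2, ev_upd3 in Hk by auto.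
      apply Hk. cbn [sat]. split; [apply sat_upd3; auto|].
      apply inI_sat. unfold Z2, U. cbn [eval_term]. rewrite u3_z2, u3_u, ev_upd3 by auto. lia. }
    eapply mt_app; [exact M1|]. eapply mt_app; eauto.
Qed.

Definition excl w a (alts : list alt) := forall g v lo hi g' v' lo' hi',
  In (g, v, lo, hi) alts -> In (g', v', lo', hi') alts -> sat w a g -> sat w a g' ->
  (g, v, lo, hi) = (g', v', lo', hi').

Ltac evs k := unfold Z1, Z2, U in *; cbn [eval_term] in *;
  rewrite ?u3_z1, ?u3_z2, ?u3_u, ?u2_z1, ?u2_z2 in *.

Lemma lev_complete w : forall d k alts a, range w a ->
  (forall al, In al alts -> AltOK (3 * k) al) ->
  (forall g v lo hi, In (g, v, lo, hi) alts -> length v <= 3 ^ d) ->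
  excl w a alts ->
  (forall g v lo hi, In (g, v, lo, hi) alts -> sat w a g ->
     mt w (eval_term w a lo) (eval_term w a hi) v) ->
  sat w a (lev k d alts).
Proof.
  induction d; intros k alts a Ha Hok Hlen Hex Hm; pose proof (Ha 0) as HN.
  - cbn [lev sat]. intros v0 Hv0. apply sat_conj. intros f Hf.
    apply in_map_iff in Hf. destruct Hf as [[[[g v] lo] hi] [<- Hal]].
    pose proof (Hok _ Hal) as (Hgq & Hlq & Hhq).
    cbn [fin sat]. intros Hg'. apply (sat_upd w (3 * k)) in Hg'; auto.
    pose proof (Hm _ _ _ _ Hal Hg') as [E M]. specialize (Hlen _ _ _ _ Hal). simpl in Hlen.
    destruct v as [|b [|c v]]; simpl in E, Hlen.
    + cbn [sat]. rewrite !(ev_upd w (3 * k)) by auto. lia.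
    + cbn [sat]. rewrite !(ev_upd w (3 * k)) by auto. split; [lia|split].
      * intros Hi. fold (inI lo hi (TVar (3 * k))) in Hi. rewrite inI_sat in Hi.
        cbn [eval_term] in *. rewrite upd_eq in *. rewrite !(ev_upd w (3 * k)) in Hi by auto. lia.
      * apply sbit_sat. rewrite !(ev_upd w (3 * k)) by auto.
        replace (eval_term w a hi - 1) with (eval_term w a lo + 0) by lia.
        apply (M 0). simpl. lia.
    + lia.
  - destruct (classic (exists g v lo hi, In (g, v, lo, hi) alts /\ sat w a g))
      as [[g0 [v0 [lo0 [hi0 [Hin0 Hg0]]]]]|Hno].
    + pose proof (Hok _ Hin0) as (Hgq & Hlq & Hhq).
      pose proof (Hm _ _ _ _ Hin0 Hg0) as M0.
      pose proof (ev_range w a lo0 Ha). pose proof (ev_range w a hi0 Ha).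
      assert (Hsum : length (P1 v0) + length (P2 v0) + length (P3 v0) = length v0).
      { rewrite <- (P_concat v0) at 4. rewrite !length_app. lia. }
      rewrite <- (P_concat v0) in M0.
      apply mt_split in M0. destruct M0 as [M1 M23]. apply mt_split in M23. destruct M23 as [M2 M3].
      pose proof (proj1 M3) as E3.
      remember (eval_term w a lo0) as l eqn:El. remember (eval_term w a hi0) as h eqn:Eh.
      remember (l + length (P1 v0)) as v1 eqn:Ev1. remember (v1 + length (P2 v0)) as v2 eqn:Ev2.
      cbn [lev sat]. exists v1. split; [lia|]. exists v2. split; [lia|].
      fold (upd2 a k v1 v2). split.
      * apply sat_conj. intros f Hf. apply in_map_iff in Hf.
        destruct Hf as [[[[g v] lo] hi] [<- Hal]].
        pose proof (Hok _ Hal) as (Hgq' & Hlq' & Hhq').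
        cbn [cond sat]. intros Hg1. apply sat_upd2 in Hg1; auto.
        pose proof (Hex _ _ _ _ _ _ _ _ Hal Hin0 Hg1 Hg0) as E. injection E; intros; subst.
        split; [|split]; apply relp_ok; evs k; rewrite ?ev_upd2 by auto; lia.
      * intros v3 Hv3. change (update (upd2 a k v1 v2) (3 * k + 2) v3) with (upd3 a k v1 v2 v3).
        assert (Hpar : forall g v lo hi gc vc loc hic,
          In (g, v, lo, hi) alts -> In (gc, vc, loc, hic) (kids k (g, v, lo, hi)) ->
          sat w (upd3 a k v1 v2 v3) gc -> (g, v, lo, hi) = (g0, v0, lo0, hi0)).
        { intros g v lo hi gc vc loc hic Hal Hc Hgc.
          pose proof (Hok _ Hal) as (Hgq' & _ & _).
          cbn [kids] in Hc. destruct Hc as [E|[E|[E|[]]]]; injection E; intros; subst;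
            cbn [sat] in Hgc; destruct Hgc as [Hgc _]; apply sat_upd3 in Hgc; auto. }
        apply IHd.
        -- apply range_upd3; auto; lia.
        -- intros c Hc. apply in_flat_map in Hc. destruct Hc as [al [Hal Hc]]. eapply kids_ok; eauto.
        -- intros g v lo hi Hc. apply in_flat_map in Hc. destruct Hc as [[[[g' v'] lo'] hi'] [Hal Hc]].
           pose proof (Hlen _ _ _ _ Hal) as Hl. rewrite Nat.pow_succ_r' in Hl.
           destruct (P_len _ _ Hl) as (L1 & L2 & L3).
           cbn [kids] in Hc. destruct Hc as [E|[E|[E|[]]]]; injection E; intros; subst; auto.
        -- intros g v lo hi g' v' lo' hi' Hc Hc' Hgc Hgc'.
           apply in_flat_map in Hc. destruct Hc as [[[[p1 p2] p3] p4] [Hal Hc]].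
           apply in_flat_map in Hc'. destruct Hc' as [[[[q1 q2] q3] q4] [Hal' Hc']].
           pose proof (Hpar _ _ _ _ _ _ _ _ Hal Hc Hgc) as E1.
           pose proof (Hpar _ _ _ _ _ _ _ _ Hal' Hc' Hgc') as E2.
           injection E1; intros; subst. injection E2; intros; subst.
           cbn [kids] in Hc, Hc'.
           destruct Hc as [E|[E|[E|[]]]]; injection E; intros; subst;
           destruct Hc' as [E'|[E'|[E'|[]]]]; injection E'; intros; subst;
           try reflexivity; exfalso;
           cbn [sat] in Hgc, Hgc'; destruct Hgc as [_ Hgc]; destruct Hgc' as [_ Hgc'];
           rewrite inI_sat in Hgc, Hgc'; evs k; rewrite ?ev_upd3 in * by auto; lia.
        -- intros g v lo hi Hc Hgc.
           apply in_flat_map in Hc. destruct Hc as [[[[p1 p2] p3] p4] [Hal Hc]].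
           pose proof (Hpar _ _ _ _ _ _ _ _ Hal Hc Hgc) as E1.
           injection E1; intros; subst.
           cbn [kids] in Hc.
           destruct Hc as [E|[E|[E|[]]]]; injection E; intros; subst;
             evs k; rewrite ?ev_upd3 by auto; auto.
    + cbn [lev sat]. exists 1. split; [lia|]. exists 1. split; [lia|].
      fold (upd2 a k 1 1). split.
      * apply sat_conj. intros f Hf. apply in_map_iff in Hf.
        destruct Hf as [[[[g v] lo] hi] [<- Hal]].
        pose proof (Hok _ Hal) as (Hgq' & _ & _).
        cbn [cond sat]. intros Hg1. apply sat_upd2 in Hg1; auto.
        exfalso. apply Hno. eauto 6.
      * intros v3 Hv3. change (update (upd2 a k 1 1) (3 * k + 2) v3) with (upd3 a k 1 1 v3).
        assert (Hpar : forall g v lo hi gc vc loc hic,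
          In (g, v, lo, hi) alts -> In (gc, vc, loc, hic) (kids k (g, v, lo, hi)) ->
          sat w (upd3 a k 1 1 v3) gc -> False).
        { intros g v lo hi gc vc loc hic Hal Hc Hgc.
          pose proof (Hok _ Hal) as (Hgq' & _ & _).
          cbn [kids] in Hc. destruct Hc as [E|[E|[E|[]]]]; injection E; intros; subst;
            cbn [sat] in Hgc; destruct Hgc as [Hgc _]; apply sat_upd3 in Hgc; auto;
            apply Hno; eauto 6. }
        apply IHd.
        -- apply range_upd3; auto; lia.
        -- intros c Hc. apply in_flat_map in Hc. destruct Hc as [al [Hal Hc]]. eapply kids_ok; eauto.
        -- intros g v lo hi Hc. apply in_flat_map in Hc. destruct Hc as [[[[g' v'] lo'] hi'] [Hal Hc]].
           pose proof (Hlen _ _ _ _ Hal) as Hl. rewrite Nat.pow_succ_r' in Hl.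
           destruct (P_len _ _ Hl) as (L1 & L2 & L3).
           cbn [kids] in Hc. destruct Hc as [E|[E|[E|[]]]]; injection E; intros; subst; auto.
        -- intros g v lo hi g' v' lo' hi' Hc Hc' Hgc Hgc'.
           apply in_flat_map in Hc. destruct Hc as [[[[p1 p2] p3] p4] [Hal Hc]].
           exfalso. eapply Hpar; eauto.
        -- intros g v lo hi Hc Hgc.
           apply in_flat_map in Hc. destruct Hc as [[[[p1 p2] p3] p4] [Hal Hc]].
           exfalso. eapply Hpar; eauto.
Qed.

Lemma exD n : exists D, n <= 3 ^ D /\ (D = 0 \/ 3 ^ (D - 1) < n).
Proof.
  assert (H : forall k, n <= 3 ^ k -> exists D, n <= 3 ^ D /\ (D = 0 \/ 3 ^ (D - 1) < n)).
  { induction k; intros Hk.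
    - exists 0. auto.
    - destruct (le_lt_dec n (3 ^ k)) as [Hl|Hl]; auto.
      exists (S k). split; auto. right. simpl. rewrite Nat.sub_0_r. auto. }
  apply (H n). apply Nat.lt_le_incl, Nat.pow_gt_lin_r. lia.
Qed.

Definition top_phi (b : bool) (w1 : list bool) (D : nat) : formula :=
  match w1 with
  | [] => FAnd (FEq TMin TMax) (sbit TMin b)
  | _ => FAnd (FNot (FEq TMin TMax)) (FAnd (sbit TMin b) (lev 0 D [(FTrue, w1, TMin, TMax)]))
  end.

Lemma alt0_ok w1 : forall al, In al [(FTrue, w1, TMin, TMax)] -> AltOK (3 * 0) al.
Proof. intros al [<-|[]]. simpl. auto. Qed.

Lemma top_sound b w1 D w' : 1 <= length w' -> models w' (top_phi b w1 D) -> w' = b :: w1.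
Proof.
  intros HN Hm. unfold models in Hm.
  assert (Ha : range w' (fun _ => 1)) by (intro; simpl; lia).
  destruct w1 as [|c w2].
  - cbn [top_phi sat eval_term] in Hm. destruct Hm as [E Hb].
    apply sbit_sat in Hb. cbn [eval_term] in Hb.
    destruct w' as [|b' [|c' w'']]; simpl in *; try lia. subst. reflexivity.
  - cbn [top_phi sat] in Hm. destruct Hm as [_ [Hb Hl]].
    apply sbit_sat in Hb. cbn [eval_term] in Hb.
    pose proof (lev_sound w' D 0 _ _ Ha (alt0_ok _) Hl FTrue (c :: w2) TMin TMax
                  (or_introl eq_refl) I) as [E M].
    cbn [eval_term] in E, M.
    destruct w' as [|b' w'']; simpl in *; try lia. subst b.
    f_equal. apply nth_ext with (d := false) (d' := false).
    + simpl in *. lia.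
    + intros i Hi. apply (M i). simpl in *. lia.
Qed.

Lemma top_complete b w1 D : length w1 <= 3 ^ D -> models (b :: w1) (top_phi b w1 D).
Proof.
  intros HD. unfold models.
  assert (Ha : range (b :: w1) (fun _ => 1)) by (intro; simpl; lia).
  destruct w1 as [|c w2].
  - cbn [top_phi sat eval_term]. split; [reflexivity|]. apply sbit_sat. reflexivity.
  - cbn [top_phi sat]. split; [simpl; lia|]. split.
    + apply sbit_sat. reflexivity.
    + apply lev_complete; auto.
      * apply alt0_ok.
      * intros g v lo hi [E|[]]. injection E; intros; subst. auto.
      * intros g v lo hi g' v' lo' hi' [E|[]] [E'|[]]. congruence.
      * intros g v lo hi [E|[]] _. injection E; intros; subst.
        split; simpl; [lia|]. intros i Hi. reflexivity.
Qed.

Lemma top_qcount b w1 D : qcount (top_phi b w1 D) <= 3 * D + 1.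
Proof.
  destruct w1; cbn [top_phi qcount].
  - destruct b; simpl; lia.
  - rewrite qc_lev by apply alt0_ok. destruct b; simpl; lia.
Qed.

Lemma top_sentence b w1 D : sentence (top_phi b w1 D).
Proof.
  unfold sentence. destruct w1 as [|b0 w1]; cbn [top_phi fv].
  - destruct b; reflexivity.
  - destruct b; simpl;
    destruct (fv (lev 0 D [(FTrue, b0 :: w1, TMin, TMax)])) as [|y l] eqn:E; auto;
    exfalso; pose proof (fv_lev D 0 _ (alt0_ok (b0 :: w1)) y) as Hy; rewrite E in Hy;
    specialize (Hy (or_introl eq_refl)); lia.
Qed.

Lemma ln_le' x y : (0 < x)%R -> (x <= y)%R -> (ln x <= ln y)%R.
Proof. intros H1 H2. destruct (Rle_lt_or_eq x y H2) as [H|H].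
  - left. apply ln_increasing; auto.
  - subst. lra. Qed.

Lemma ln3_pos : (0 < ln 3)%R.
Proof. rewrite <- ln_1. apply ln_increasing; lra. Qed.

Lemma log3_nonneg n : 1 <= n -> (0 <= log3 (INR n))%R.
Proof.
  intros H. unfold log3. apply Rmult_le_pos.
  - rewrite <- ln_1. apply ln_le'; [lra|]. apply (le_INR 1). auto.
  - left. apply Rinv_0_lt_compat, ln3_pos.
Qed.

Theorem mainTheorem10 :
  exists C : R,
    forall (n : nat) (w : list bool),
      1 <= n -> length w = n ->
      exists phi : formula,
        sentence phi /\
        (INR (qcount phi) <= 3 * log3 (INR n) + C)%R /\
        models w phi /\
        (forall w' : list bool, 1 <= length w' -> w' <> w -> ~ models w' phi).
Proof.
  exists 4%R. intros n w Hn Hlen.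
  destruct w as [|b w1]; [simpl in Hlen; lia|].
  destruct (exD (length w1)) as [D [HD1 HD2]].
  exists (top_phi b w1 D). split; [apply top_sentence|]. split; [|split].
  - apply Rle_trans with (INR (3 * D + 1)); [apply le_INR, top_qcount|].
    pose proof (log3_nonneg n Hn).
    destruct HD2 as [->|HD2].
    + simpl. lra.
    + destruct D as [|D']; [simpl; lra|].
      simpl in HD2. rewrite Nat.sub_0_r in HD2.
      assert (Hl : (INR D' <= log3 (INR n))%R).
      { unfold log3. apply (Rmult_le_reg_r (ln 3)); [apply ln3_pos|].
        unfold Rdiv. rewrite Rmult_assoc, Rinv_l, Rmult_1_r by (apply Rgt_not_eq, ln3_pos).
        rewrite <- ln_pow by lra.
        apply ln_le'; [apply pow_lt; lra|].
        replace 3%R with (INR 3) by (simpl; lra). rewrite <- pow_INR.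
        apply le_INR. simpl in Hlen. lia. }
      rewrite plus_INR, mult_INR, (S_INR D'). replace (INR 3) with 3%R by (simpl; lra). simpl (INR 1). lra.
  - apply top_complete. auto.
  - intros w' Hw' Hne Hm. apply Hne. eapply top_sound; eauto.
Qed.
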